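(* Prioritized planning is suboptimal for the flowtime objective in general for the class of P-solvable MAPF instances: there exists a P-solvable MAPF instance such that, for every priority ordering $\prec$, every solution consistent with $\prec$ has flowtime strictly greater than the minimum flowtime over all solutions of the instance.
   Context: A MAPF instance consists of a connected undirected graph $G=(V,E)$ and $M$ agents $a_1,\dots,a_M$; agent $a_i$ has a start vertex $s_i$ and a target vertex $t_i$, and start vertices are pairwise distinct, as are target vertices. Time is discrete; at each time step every agent either moves to an adjacent vertex or waits. A path for $a_i$ is a sequence $\pi_i=\langle \pi_i(0),\pi_i(1),\dots\rangle$ with $\pi_i(0)=s_i$, consecutive vertices equal or adjacent, and $\pi_i(t)=t_i$ for all $t\ge T_i$, where the arrival time $T_i$ is the least such time. Two agents collide if they occupy the same vertex at the same time, or traverse the same edge in opposite directions at the same time step. A solution is a collision-free set of paths, one per agent; its flowtime is $\sum_{i=1}^M T_i$. A priority ordering is a strict partial order $\prec$ on $\{1,\dots,M\}$ ($a_i$ has higher priority than $a_j$ iff $i\prec j$). A solution $\{\pi_i\}$ is consistent with $\prec$ if for every $i$ the arrival time of $\pi_i$ equals the minimum arrival time over all paths for $a_i$ that do not collide with any $\pi_k$ with $k\prec i$ (higher priority agents never wait for lower priority agents). A MAPF instance is P-solvable iff it has a solution consistent with some priority ordering. *)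

(* Defs.v *)
From mathcomp Require Import all_boot.
Set Implicit Arguments. Unset Strict Implicit. Unset Printing Implicit Defensive.

Section MAPF.
Variables (n M : nat) (e : rel 'I_n).

Definition mapf_instance (s tg : 'I_M -> 'I_n) : Prop :=
  symmetric e /\ irreflexive e /\ (forall x y, connect e x y) /\
  injective s /\ injective tg.

Definition stays_from (tg : 'I_n) (p : nat -> 'I_n) (T : nat) : Prop :=
  forall t, T <= t -> p t = tg.

Definition valid_path (s0 t0 : 'I_n) (p : nat -> 'I_n) : Prop :=
  p 0 = s0 /\ (forall t, p t = p t.+1 \/ e (p t) (p t.+1)) /\
  exists T, stays_from t0 p T.

Definition arrival (t0 : 'I_n) (p : nat -> 'I_n) (T : nat) : Prop :=
  stays_from t0 p T /\ forall T', stays_from t0 p T' -> T <= T'.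

Definition collide (p q : nat -> 'I_n) : Prop :=
  exists t, p t = q t \/ (p t = q t.+1 /\ p t.+1 = q t).

Definition is_solution (s tg : 'I_M -> 'I_n) (P : 'I_M -> nat -> 'I_n) : Prop :=
  (forall i, valid_path (s i) (tg i) (P i)) /\
  (forall i j, i != j -> ~ collide (P i) (P j)).

Definition has_flowtime (tg : 'I_M -> 'I_n) (P : 'I_M -> nat -> 'I_n) (F : nat) : Prop :=
  exists T : 'I_M -> nat, (forall i, arrival (tg i) (P i) (T i)) /\ F = \sum_(i < M) T i.

Definition min_flowtime (s tg : 'I_M -> 'I_n) (Fmin : nat) : Prop :=
  (exists P, is_solution s tg P /\ has_flowtime tg P Fmin) /\
  (forall P F, is_solution s tg P -> has_flowtime tg P F -> Fmin <= F).

(* priority ordering: prec i j means a_i has higher priority than a_j *)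
Definition strict_partial_order (prec : rel 'I_M) : Prop :=
  irreflexive prec /\ transitive prec.

Definition consistent (s tg : 'I_M -> 'I_n) (prec : rel 'I_M)
    (P : 'I_M -> nat -> 'I_n) : Prop :=
  is_solution s tg P /\
  forall i, exists Ti, arrival (tg i) (P i) Ti /\
    forall (q : nat -> 'I_n) (Tq : nat),
      valid_path (s i) (tg i) q ->
      (forall k, prec k i -> ~ collide q (P k)) ->
      arrival (tg i) q Tq -> Ti <= Tq.

Definition P_solvable (s tg : 'I_M -> 'I_n) : Prop :=
  exists prec, strict_partial_order prec /\ exists P, consistent s tg prec P.

End MAPF.

(* Main.v *)
Require Import Defs.
From mathcomp Require Import all_boot zify.
Set Implicit Arguments. Unset Strict Implicit. Unset Printing Implicit Defensive.

Section Reach.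
Variables (S : eqType) (succ : nat -> S -> seq S) (init : S).
Fixpoint expand k (l : seq S) : seq S :=
  match l with [::] => [::] | x :: l' => succ k x ++ expand k l' end.
Fixpoint reach k : seq S :=
  match k with 0 => [:: init] | k'.+1 => undup (expand k' (reach k')) end.
Lemma expandP k x y l : x \in l -> y \in succ k x -> y \in expand k l.
Proof.
elim: l => [|z l IH] //=; rewrite in_cons mem_cat => /orP [/eqP <- -> //|xl yk].
by rewrite IH // orbT.
Qed.
Lemma reach_sound (f : nat -> S) : f 0 = init ->
  (forall t, f t.+1 \in succ t (f t)) -> forall t, f t \in reach t.
Proof.
move=> H0 HS; elim=> [|t IH] /=; first by rewrite H0 mem_seq1.
by rewrite mem_undup; apply: expandP IH (HS t).
Qed.
End Reach.

Definition nbrs (x : nat) : seq nat :=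
  match x with
  | 0 => [:: 2; 4; 5] | 1 => [:: 3; 4] | 2 => [:: 3; 0] | 3 => [:: 5; 1; 2]
  | 4 => [:: 6; 0; 1] | 5 => [:: 0; 3] | 6 => [:: 4] | _ => [::] end.
Definition nb x := x :: nbrs x.
Definition E7 : rel 'I_7 := fun x y => val y \in nbrs (val x).

Definition v0 : 'I_7 := @Ordinal 7 0 isT.
Definition v1 : 'I_7 := @Ordinal 7 1 isT.
Definition v2 : 'I_7 := @Ordinal 7 2 isT.
Definition v3 : 'I_7 := @Ordinal 7 3 isT.
Definition v4 : 'I_7 := @Ordinal 7 4 isT.
Definition v6 : 'I_7 := @Ordinal 7 6 isT.
Definition a0 : 'I_2 := @Ordinal 2 0 isT.
Definition a1 : 'I_2 := @Ordinal 2 1 isT.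
Lemma I2 (k : 'I_2) : k = a0 \/ k = a1.
Proof. by case: k => [[|[|m]] Hm]; [left|right|]; try apply: val_inj. Qed.
Lemma a01 : a0 != a1. Proof. by []. Qed.

Definition S7 (i : 'I_2) : 'I_7 := if i == a0 then v6 else v1.
Definition G7 (i : 'I_2) : 'I_7 := if i == a0 then v3 else v4.

Lemma step_nb (p : nat -> 'I_7) t : p t = p t.+1 \/ E7 (p t) (p t.+1) ->
  val (p t.+1) \in nb (val (p t)).
Proof. by case=> [->|H]; rewrite in_cons ?eqxx // -/(E7 _ _) H orbT. Qed.

Definition succ2 (T0 T1 : nat) (k : nat) (st : nat * nat) : seq (nat * nat) :=
  [seq st' <- [seq (x, y) | x <- nb st.1, y <- nb st.2] |
     [&& st'.1 != st'.2, ~~ ((st'.1 == st.2) && (st'.2 == st.1)),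
         (T0 <= k.+1) ==> (st'.1 == 3) & (T1 <= k.+1) ==> (st'.2 == 4)]].

Definition badpair (T0 T1 : nat) :=
  (T0 + T1 < 6) || ((T0 + T1 == 6) && ((T0 <= 3) || (T1 <= 1))).

Lemma check2 : all (fun T0 => all (fun T1 =>
  badpair T0 T1 ==> (reach (succ2 T0 T1) (6, 1) 6 == [::])) (iota 0 7)) (iota 0 7).
Proof. vm_compute. reflexivity. Qed.

Lemma collide_sym n (p q : nat -> 'I_n) : collide p q -> collide q p.
Proof. by case=> t [H|[H1 H2]]; exists t; [left|right]. Qed.

Lemma pairs_ok P T0 T1 : is_solution E7 S7 G7 P ->
  stays_from (G7 a0) (P a0) T0 -> stays_from (G7 a1) (P a1) T1 ->
  ~~ badpair T0 T1.
Proof.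
move=> [Hv Hc] H0 H1; apply/negP => Hb.
have HT0 : T0 < 7.
  by move: Hb; rewrite /badpair; case/orP=> [|/andP[/eqP]]; lia.
have HT1 : T1 < 7.
  by move: Hb; rewrite /badpair; case/orP=> [|/andP[/eqP]]; lia.
have Hr : reach (succ2 T0 T1) (6, 1) 6 = [::].
  have i0 : T0 \in iota 0 7 by rewrite mem_iota leq0n.
  have i1 : T1 \in iota 0 7 by rewrite mem_iota leq0n.
  apply/eqP; move: (allP (allP check2 T0 i0) T1 i1); by rewrite Hb.
pose f t := (val (P a0 t), val (P a1 t)).
suff: f 6 \in reach (succ2 T0 T1) (6, 1) 6 by rewrite Hr in_nil.
apply: reach_sound.
- have [h0 _] := Hv a0; have [h1 _] := Hv a1.
  by rewrite /f h0 h1.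
- move=> t; rewrite /succ2 mem_filter; apply/andP; split; last first.
    apply: allpairs_f; apply: step_nb.
    - by have [_ [Hs _]] := Hv a0; apply: Hs.
    - by have [_ [Hs _]] := Hv a1; apply: Hs.
  have Hn := Hc a0 a1 a01.
  rewrite /f /=; apply/and4P; split.
  - apply/negP => /eqP /val_inj E; apply: Hn; exists t.+1; by left.
  - apply/negP => /andP [/eqP /val_inj E1 /eqP /val_inj E2].
    by apply: Hn; exists t; right.
  - apply/implyP => le; have := H0 _ le; by move ->.
  - apply/implyP => le; have := H1 _ le; by move ->.
Qed.

Definition v5 : 'I_7 := @Ordinal 7 5 isT.
Definition lp (l : seq 'I_7) (d : 'I_7) : nat -> 'I_7 := fun t => nth d l t.

Lemma lp_end l d t : size l <= t -> lp l d t = d.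
Proof. by move=> H; rewrite /lp nth_default. Qed.

Lemma natchk K (Q : nat -> bool) : all Q (iota 0 K) -> forall t, t < K -> Q t.
Proof. by move=> /allP H t Ht; apply: H; rewrite mem_iota leq0n. Qed.

Lemma valid_lp s0 l d : lp l d 0 = s0 ->
  all (fun t => (lp l d t == lp l d t.+1) || E7 (lp l d t) (lp l d t.+1)) (iota 0 (size l)) ->
  valid_path E7 s0 d (lp l d).
Proof.
move=> H0 Hc; split => //; split; last by exists (size l) => t; apply: lp_end.
move=> t; case: (ltnP t (size l)) => Ht.
  by case/orP: (natchk Hc Ht) => [/eqP|]; [left|right].
by left; rewrite !lp_end // (leq_trans Ht).
Qed.

Lemma arrival_lp l d : 0 < size l -> lp l d (size l).-1 != d ->
  arrival d (lp l d) (size l).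
Proof.
move=> Hs Hn; split; first by move=> t; apply: lp_end.
move=> T' HT; case: (ltnP T' (size l)) => // Hlt.
have := HT (size l).-1; rewrite -ltnS prednK // => /(_ Hlt) E.
by rewrite E eqxx in Hn.
Qed.

Lemma nocoll_lp l1 d1 l2 d2 K : size l1 <= K -> size l2 <= K -> d1 != d2 ->
  all (fun t => (lp l1 d1 t != lp l2 d2 t) &&
     ~~ ((lp l1 d1 t == lp l2 d2 t.+1) && (lp l1 d1 t.+1 == lp l2 d2 t))) (iota 0 K) ->
  ~ collide (lp l1 d1) (lp l2 d2).
Proof.
move=> H1 H2 Hd Hc [t Ht]; case: (ltnP t K) => HtK.
  move/andP: (natchk Hc HtK) => [/eqP A /negP B].
  case: Ht => [//|[E1 E2]]; apply: B; by rewrite E1 E2 !eqxx.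
have e1 u : K <= u -> lp l1 d1 u = d1 by move=> Hu; apply: lp_end; apply: leq_trans Hu.
have e2 u : K <= u -> lp l2 d2 u = d2 by move=> Hu; apply: lp_end; apply: leq_trans Hu.
have HtK' : K <= t.+1 by apply: leq_trans HtK _.
case: Ht => [E|[E _]]; move: E; rewrite ?e1 ?e2 // => E; by rewrite E eqxx in Hd.
Qed.

Lemma sol2 (X : 'I_2 -> nat -> 'I_7) :
  valid_path E7 (S7 a0) (G7 a0) (X a0) -> valid_path E7 (S7 a1) (G7 a1) (X a1) ->
  ~ collide (X a0) (X a1) -> is_solution E7 S7 G7 X.
Proof.
move=> V0 V1 C; split.
  by move=> i; case: (I2 i) => ->.
move=> i j; case: (I2 i) => ->; case: (I2 j) => -> // _ H; apply: C => //.
exact: collide_sym.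
Qed.

Lemma sum2 (T : 'I_2 -> nat) : \sum_(i < 2) T i = T a0 + T a1.
Proof. by rewrite big_ord_recr big_ord1; congr (T _ + T _); apply: val_inj. Qed.

Lemma arr_uniq n (tg : 'I_n) p T1 T2 : arrival tg p T1 -> arrival tg p T2 -> T1 = T2.
Proof. by move=> [s1 m1] [s2 m2]; apply/eqP; rewrite eqn_leq m1 // m2. Qed.

Definition succ1 (T : nat) (k : nat) (x : nat) : seq nat :=
  [seq x' <- nb x | (T <= k.+1) ==> (x' == 3)].
Lemma check1 : all (fun T => reach (succ1 T) 6 2 == [::]) (iota 0 3).
Proof. vm_compute. reflexivity. Qed.

Lemma lower0 q T : valid_path E7 v6 v3 q -> stays_from v3 q T -> 3 <= T.
Proof.
move=> [H0 [Hs _]] HT; rewrite leqNgt; apply/negP => Hlt.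
have Hr : reach (succ1 T) 6 2 = [::] by apply/eqP; apply: (natchk check1 Hlt).
pose f t := val (q t).
suff: f 2 \in reach (succ1 T) 6 2 by rewrite Hr in_nil.
apply: reach_sound; first by rewrite /f H0.
move=> t; rewrite /succ1 mem_filter; apply/andP; split; last exact: step_nb.
by apply/implyP => le; rewrite /f (HT _ le).
Qed.

Definition PP0 := lp [:: v6; v4; v1] v3.
Definition PP1 := lp [:: v1; v3; v2; v0] v4.
Definition PP (i : 'I_2) := if i == a0 then PP0 else PP1.

Definition succB (T : nat) (k : nat) (x : nat) : seq nat :=
  [seq x' <- nb x | [&& x' != val (PP0 k.+1),
     ~~ ((x' == val (PP0 k)) && (x == val (PP0 k.+1))) & (T <= k.+1) ==> (x' == 4)]].
Lemma checkB : all (fun T => reach (succB T) 1 3 == [::]) (iota 0 4).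
Proof. vm_compute. reflexivity. Qed.

Lemma lower1 q T : valid_path E7 v1 v4 q -> ~ collide q PP0 -> stays_from v4 q T -> 4 <= T.
Proof.
move=> [H0 [Hs _]] Hc HT; rewrite leqNgt; apply/negP => Hlt.
have Hr : reach (succB T) 1 3 = [::] by apply/eqP; apply: (natchk checkB Hlt).
pose f t := val (q t).
suff: f 3 \in reach (succB T) 1 3 by rewrite Hr in_nil.
apply: reach_sound; first by rewrite /f H0.
move=> t; rewrite /succB mem_filter; apply/andP; split; last exact: step_nb.
apply/and3P; split.
- apply/negP => /eqP /val_inj E; apply: Hc; exists t.+1; by left.
- apply/negP => /andP [/eqP /val_inj E1 /eqP /val_inj E2]; apply: Hc; exists t; by right.
- by apply/implyP => le; rewrite /f (HT _ le).
Qed.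

Lemma PP0_valid : valid_path E7 v6 v3 PP0.
Proof. apply: valid_lp => //; vm_compute; reflexivity. Qed.
Lemma PP1_valid : valid_path E7 v1 v4 PP1.
Proof. apply: valid_lp => //; vm_compute; reflexivity. Qed.
Lemma PP_nocoll : ~ collide PP0 PP1.
Proof. apply: (@nocoll_lp _ _ _ _ 4) => //; vm_compute; reflexivity. Qed.
Lemma PP0_arr : arrival v3 PP0 3.
Proof. exact: arrival_lp. Qed.
Lemma PP1_arr : arrival v4 PP1 4.
Proof. exact: arrival_lp. Qed.

Definition solo1 := lp [:: v1] v4.
Lemma solo1_valid : valid_path E7 v1 v4 solo1.
Proof. apply: valid_lp => //; vm_compute; reflexivity. Qed.
Lemma solo1_arr : arrival v4 solo1 1.
Proof. exact: arrival_lp. Qed.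

Definition QQ0 := lp [:: v6; v4; v0; v2] v3.
Definition QQ1 := lp [:: v1; v1] v4.
Definition QQ (i : 'I_2) := if i == a0 then QQ0 else QQ1.
Lemma QQ0_valid : valid_path E7 v6 v3 QQ0.
Proof. apply: valid_lp => //; vm_compute; reflexivity. Qed.
Lemma QQ1_valid : valid_path E7 v1 v4 QQ1.
Proof. apply: valid_lp => //; vm_compute; reflexivity. Qed.
Lemma QQ_nocoll : ~ collide QQ0 QQ1.
Proof. apply: (@nocoll_lp _ _ _ _ 4) => //; vm_compute; reflexivity. Qed.
Lemma QQ0_arr : arrival v3 QQ0 4.
Proof. exact: arrival_lp. Qed.
Lemma QQ1_arr : arrival v4 QQ1 2.
Proof. exact: arrival_lp. Qed.

Lemma all7 (Q : nat -> bool) : all Q (iota 0 7) -> forall x : 'I_7, Q x.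
Proof. by move=> H x; apply: (natchk H). Qed.

Lemma E7sym : symmetric E7.
Proof.
have H : all (fun x => all (fun y => (y \in nbrs x) == (x \in nbrs y)) (iota 0 7)) (iota 0 7).
  vm_compute; reflexivity.
by move=> x y; have /eqP := all7 (all7 H x) y.
Qed.
Lemma E7irr : irreflexive E7.
Proof.
have H : all (fun x => x \notin nbrs x) (iota 0 7) by vm_compute; reflexivity.
by move=> x; apply/negbTE; apply: (all7 H).
Qed.
Lemma E7conn x y : connect E7 x y.
Proof.
suff H : forall z, connect E7 z v4.
  by apply: connect_trans (H x) _; rewrite (sym_connect_sym E7sym); apply: H.
have c1 a b : E7 a b -> connect E7 a b by apply: connect1.
have t0 : connect E7 v0 v4 by apply: c1.
have t1 : connect E7 v1 v4 by apply: c1.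
have t6 : connect E7 v6 v4 by apply: c1.
have t2 : connect E7 v2 v4 by apply: connect_trans t0; apply: c1.
have t3 : connect E7 v3 v4 by apply: connect_trans t1; apply: c1.
have t5 : connect E7 v5 v4 by apply: connect_trans t0; apply: c1.
case=> [[|[|[|[|[|[|[|m]]]]]]] Hm] //;
 [move: t0|move: t1|move: t2|move: t3|move: (connect0 E7 v4)|move: t5|move: t6];
 by congr (is_true (connect _ _ _)); apply: val_inj.
Qed.

Lemma inst : mapf_instance E7 S7 G7.
Proof.
split; first exact: E7sym. split; first exact: E7irr. split; first exact: E7conn.
split; move=> i j; case: (I2 i) => ->; case: (I2 j) => -> //; rewrite /S7 /G7 /= => E;
  by have := congr1 val E.
Qed.

Theorem theorem4 :
  exists (n M : nat) (e : rel 'I_n) (s tg : 'I_M -> 'I_n),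
    mapf_instance e s tg /\ P_solvable e s tg /\
    exists Fmin, min_flowtime e s tg Fmin /\
      forall prec : rel 'I_M, strict_partial_order prec ->
      forall P, consistent e s tg prec P ->
      forall F, has_flowtime tg P F -> Fmin < F.
Proof.
exists 7, 2, E7, S7, G7; split; first exact: inst.
split.
  exists (fun i j => (i == a0) && (j == a1)); split.
    split; first by move=> i; case: (I2 i) => ->.
    by move=> j i k /andP [_ /eqP ->] /andP [/eqP H _].
  exists PP; split.
    by apply: sol2; [exact: PP0_valid|exact: PP1_valid|exact: PP_nocoll].
  move=> i; case: (I2 i) => ->.
    exists 3; split; first exact: PP0_arr.
    by move=> q Tq Hq _ [Hs _]; apply: (lower0 Hq Hs).
  exists 4; split; first exact: PP1_arr.
  move=> q Tq Hq Hc [Hs _]; apply: (lower1 Hq _ Hs).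
  exact: (Hc a0).
exists 6; split.
  split.
    exists QQ; split.
      by apply: sol2; [exact: QQ0_valid|exact: QQ1_valid|exact: QQ_nocoll].
    exists (fun i => if i == a0 then 4 else 2); split; last by rewrite sum2.
    by move=> i; case: (I2 i) => ->; [exact: QQ0_arr|exact: QQ1_arr].
  move=> P F HP [T [HT ->]]; rewrite sum2.
  have := pairs_ok HP (HT a0).1 (HT a1).1; rewrite /badpair; lia.
move=> prec [Hirr Htr] P [HP Hc] F [T [HT ->]]; rewrite sum2.
have Hb := pairs_ok HP (HT a0).1 (HT a1).1.
have Hk : forall k, k = a0 \/ k = a1 := I2.
case H10 : (prec a1 a0).
- have H01 : prec a0 a1 = false.
    apply/negbTE/negP => H; have := Htr _ _ _ H H10; by rewrite Hirr.
  have [Ti [Ha Hle]] := Hc a1.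
  have := Hle solo1 1 solo1_valid _ solo1_arr.
  rewrite -(arr_uniq (HT a1) Ha) => H1.
  have {}H1 : T a1 <= 1.
    apply: H1 => k; case: (Hk k) => ->; by rewrite ?Hirr ?H01.
  move: Hb; rewrite /badpair; lia.
- have [Ti [Ha Hle]] := Hc a0.
  have := Hle PP0 3 PP0_valid _ PP0_arr.
  rewrite -(arr_uniq (HT a0) Ha) => H1.
  have {}H1 : T a0 <= 3.
    apply: H1 => k; case: (Hk k) => ->; by rewrite ?Hirr ?H10.
  move: Hb; rewrite /badpair; lia.
Qed.
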